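(* Let $n\ge1$ and let $\mathcal A,\mathcal S$ be subsets of $\{E_{ij}:1\le i,j\le n\}$, with associated digraphs $\mathcal G_{\mathcal A}$, $\mathcal G_{\mathcal S}$ on $\{1,\dots,n\}$ (arc $(i,j)$ iff $E_{ij}$ belongs to the set; arcs $(i,i)$ are self-loops). Suppose (i) each weakly connected component of $\mathcal G_{\mathcal S}$ is strongly connected with at least two nodes; (ii) the union digraph $\mathcal G_{\mathcal A}\cup\mathcal G_{\mathcal S}$ is strongly connected and has at least one self-loop. Then there exists $A\in\Sigma_{\rm r}(\mathcal A)$ such that the real Lie algebra generated by $\{A\}\cup\mathcal S$ equals $\mathfrak{gl}(n)$.
   Context: $E_{ij}$ is the $n\times n$ matrix unit; $\mathfrak{gl}(n)$ is the Lie algebra of real $n\times n$ matrices with commutator bracket. For $\mathcal A=\{g_1,\dots,g_k\}$, $\Sigma_{\rm r}(\mathcal A)=\{\sum_s l_sg_s: l_s\in\mathbb R,\ l_s\ne0\text{ for all }s\}$. Weakly connected component: connected component ignoring arc directions; strongly connected: all nodes mutually reachable via directed paths. *)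

(* Defs.v *)
From HB Require Import structures.
From mathcomp Require Import all_boot all_order all_algebra.
From mathcomp Require Import reals.
Set Implicit Arguments. Unset Strict Implicit. Unset Printing Implicit Defensive.
Import Order.TTheory GRing.Theory Num.Theory.
Local Open Scope ring_scope.

(* A set of matrix units {E_ij} is encoded by the set of index pairs (i,j). *)

Definition arcs (n : nat) (S : {set 'I_n * 'I_n}) : rel 'I_n :=
  fun i j => (i, j) \in S.

Definition warcs (n : nat) (S : {set 'I_n * 'I_n}) : rel 'I_n :=
  fun i j => ((i, j) \in S) || ((j, i) \in S).

Definition wcc_strong_ge2 (n : nat) (S : {set 'I_n * 'I_n}) : Prop :=
  (forall i j : 'I_n, connect (warcs S) i j -> connect (arcs S) i j) /\
  (forall i : 'I_n, exists j : 'I_n, j != i /\ connect (warcs S) i j).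

Definition strongly_connected (n : nat) (S : {set 'I_n * 'I_n}) : Prop :=
  forall i j : 'I_n, connect (arcs S) i j.

Definition has_self_loop (n : nat) (S : {set 'I_n * 'I_n}) : Prop :=
  exists i : 'I_n, (i, i) \in S.

Definition Sigma_r (R : realType) (n : nat) (A : {set 'I_n * 'I_n})
  (M : 'M[R]_n) : Prop :=
  exists l : 'I_n * 'I_n -> R,
    (forall p, p \in A -> l p != 0) /\
    M = \sum_(p in A) l p *: delta_mx p.1 p.2.

Definition lie_closed (R : realType) (n : nat) (L : 'M[R]_n -> Prop) : Prop :=
  L 0 /\
  (forall (a : R) x y, L x -> L y -> L (a *: x + y)) /\
  (forall x y, L x -> L y -> L (x *m y - y *m x)).

Definition lie_gen (R : realType) (n : nat) (X : 'M[R]_n -> Prop)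
  (M : 'M[R]_n) : Prop :=
  forall L : 'M[R]_n -> Prop, lie_closed L -> (forall x, X x -> L x) -> L M.

(* Main.v *)
Require Import Defs.
From HB Require Import structures.
From mathcomp Require Import all_boot all_order all_algebra.
From mathcomp Require Import reals.
From mathcomp Require Import ring lra zify.
From Stdlib Require Import Classical_Prop.
Import Order.TTheory GRing.Theory Num.Theory.
Local Open Scope ring_scope.
Set Implicit Arguments. Unset Strict Implicit.

Section Basic.
Variables (R : realType) (n : nat).
Variable L : 'M[R]_n -> Prop.
Hypothesis HL : lie_closed L.

Local Notation E := (@delta_mx R n n).

Lemma L0 : L 0. Proof. by case: HL. Qed.
Lemma LaddZ a x y : L x -> L y -> L (a *: x + y).
Proof. by case: HL => _ [H _]; apply: H. Qed.
Lemma Lbr x y : L x -> L y -> L (x *m y - y *m x).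
Proof. by case: HL => _ [_ H]; apply: H. Qed.
Lemma LZ a x : L x -> L (a *: x).
Proof. by move=> Hx; have := LaddZ a Hx L0; rewrite addr0. Qed.
Lemma LD x y : L x -> L y -> L (x + y).
Proof. by move=> Hx Hy; have := LaddZ 1 Hx Hy; rewrite scale1r. Qed.
Lemma LB x y : L x -> L y -> L (x - y).
Proof. by move=> Hx Hy; have := LD Hx (LZ (-1) Hy); rewrite scaleN1r. Qed.
Lemma Lsum (I : finType) (P : pred I) (F : I -> 'M[R]_n) :
  (forall i, P i -> L (F i)) -> L (\sum_(i | P i) F i).
Proof. move=> H; apply: big_ind => //; [exact: L0|exact: LD]. Qed.

Definition Lp i j := L (E i j).

Lemma Lp_trans i j k : i != k -> Lp i j -> Lp j k -> Lp i k.
Proof.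
move=> ik Hij Hjk; have := Lbr Hij Hjk.
by rewrite !mul_delta_mx_cond eqxx eq_sym (negbTE ik) mulr0n subr0.
Qed.

Definition dmx (d : 'I_n -> int) : 'M[R]_n := diag_mx (\row_x ((d x)%:~R)).

Lemma Lfilt d mu X : L (dmx d) -> L X ->
  L (\matrix_(p,q) (((d p)%:~R - (d q)%:~R - mu) * X p q)).
Proof.
move=> Hd HX; have := LaddZ (-mu) HX (Lbr Hd HX).
congr L; apply/matrixP=> p q.
rewrite /dmx mul_diag_mx mul_mx_diag !mxE; ring.
Qed.

Lemma Lprod d X (s : seq R) : L (dmx d) -> L X ->
  L (\matrix_(p,q) ((\prod_(m <- s) ((d p)%:~R - (d q)%:~R - m)) * X p q)).
Proof.
move=> Hd HX; elim: s => [|m s IH].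
  by congr L: HX; apply/matrixP=> p q; rewrite mxE big_nil mul1r.
have := Lfilt m Hd IH; congr L; apply/matrixP=> p q.
by rewrite !mxE big_cons mulrA.
Qed.

Definition rng : seq int := [:: -3; -2; -1; 0; 1; 2; 3].

Lemma rngP (x : int) : -3 <= x <= 3 -> x \in rng.
Proof.
move=> H; have : x = -3 \/ x = -2 \/ x = -1 \/ x = 0 \/ x = 1 \/ x = 2 \/ x = 3 by lia.
by do ![case=> [->|] //]; move=> ->.
Qed.

Lemma Lproj d X (lam : int) : lam \in rng -> (forall p q, d p - d q \in rng) ->
  L (dmx d) -> L X -> L (\matrix_(p,q) (if d p - d q == lam then X p q else 0)).
Proof.
move=> Hlam Hr Hd HX.
set s := [seq (m%:~R : R) | m <- rng & m != lam].
set c := \prod_(m <- s) (lam%:~R - m).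
have c0 : c != 0.
  rewrite prodf_seq_neq0; apply/allP => m /mapP[k]; rewrite mem_filter.
  by move=> /andP[klam _] ->; rewrite /= -intrB intr_eq0 subr_eq0 eq_sym.
have := LZ c^-1 (Lprod s Hd HX); congr L; apply/matrixP=> p q.
rewrite !mxE -intrB; case: eqP => [->|ne].
  by rewrite mulrA mulVf // mul1r.
rewrite (big_rem ((d p - d q)%:~R)) /= ?subrr ?mul0r ?mulr0 //.
by apply/mapP; exists (d p - d q) => //; rewrite mem_filter Hr andbT; apply/eqP.
Qed.


Definition wt (i i' : 'I_n) (x : 'I_n) : int := (x == i)%:Z - (x == i')%:Z.

Lemma wt_rng i i' p q : wt i i' p - wt i i' q \in rng.
Proof. by rewrite /wt; case: (p == i); case: (p == i'); case: (q == i); case: (q == i'). Qed.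

Lemma Ldiff i i' : i != i' -> Lp i i' -> Lp i' i -> L (dmx (wt i i')).
Proof.
move=> ii' H1 H2; have := Lbr H1 H2; rewrite !mul_delta_mx_cond !eqxx !mulr1n.
congr L; apply/matrixP=> p q; rewrite /dmx /wt !mxE.
have [<-|pq] := eqVneq p q.
  by rewrite !andbb mulr1n intrB.
have F x : ((p == x) && (q == x)) = false.
  by apply/negbTE/andP => -[/eqP e1 /eqP e2]; move: pq; rewrite e1 e2 eqxx.
by rewrite mulr0n !F subrr.
Qed.

Lemma Lkey A0 i j i' j' : i != j -> i != i' -> i != j' -> j != i' -> j != j' -> i' != j' ->
  L A0 -> L (dmx (wt i i')) -> L (dmx (wt j j')) ->
  L (A0 i j *: E i j + A0 j' i' *: E j' i').
Proof.
move=> ij ii' ij' ji' jj' i'j' HA Hi Hj.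
have H1 := Lproj (lam := 1) (erefl _) (@wt_rng i i') Hi HA.
have H2 := Lproj (lam := -1) (erefl _) (@wt_rng j j') Hj H1.
congr L: H2; apply/matrixP => p q; rewrite !mxE /wt.
have NE := (negbTE ij, negbTE ii', negbTE ij', negbTE ji', negbTE jj', negbTE i'j').
have NE2 := (eq_sym j i, eq_sym i' i, eq_sym j' i, eq_sym i' j, eq_sym j' j, eq_sym j' i').
have [->|pi] := eqVneq p i; last have [->|pi'] := eqVneq p i'; 
  last have [->|pj] := eqVneq p j; last have [->|pj'] := eqVneq p j';
  (have [->|qi] := eqVneq q i; last have [->|qi'] := eqVneq q i'; 
  last have [->|qj] := eqVneq q j; last have [->|qj'] := eqVneq q j');
  rewrite ?eqxx ?NE2 ?NE ?(negbTE pi) ?(negbTE pi') ?(negbTE pj) ?(negbTE pj')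
    ?(negbTE qi) ?(negbTE qi') ?(negbTE qj) ?(negbTE qj') /= ?mulr0 ?mulr1 ?addr0 ?add0r //.
Qed.

Lemma Lsep X d a b i j i' j' : L X -> L (dmx d) -> (forall p q, d p - d q \in rng) ->
  X = a *: E i j + b *: E j' i' -> a != 0 -> i != j' ->
  d j' - d i' != d i - d j -> Lp i j.
Proof.
move=> HX Hd Hr eX a0 ij' dne.
have H := LZ a^-1 (Lproj (Hr i j) Hr Hd HX).
congr L: H; apply/matrixP => p q; rewrite eX !mxE.
case: (boolP ((p == i) && (q == j))) => [/andP[/eqP-> /eqP->]|P].
  by rewrite !eqxx /= (negbTE ij') mulr0 addr0 mulr1 mulVf.
rewrite mulr0 add0r.
case: (boolP ((p == j') && (q == i'))) => [/andP[/eqP-> /eqP->]|Q].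
  by rewrite (negbTE dne) mulr0.
by rewrite mulr0 if_same mulr0.
Qed.

Lemma Lp_path (S : {set 'I_n * 'I_n}) :
  (forall p, p \in S -> L (E p.1 p.2)) ->
  forall p q, connect (arcs S) p q -> p != q -> Lp p q.
Proof.
move=> HS p q /connectP[s Hs ->] pq.
suff : forall x, path (arcs S) x s -> (x = p \/ Lp p x) ->
  (last x s = p \/ Lp p (last x s)).
  by move=> /(_ p Hs (or_introl erefl)) [e|//]; rewrite e eqxx in pq.
elim: s {Hs pq} => [|y s IH] x //= /andP[Hxy Hs] Hx; apply: IH Hs _.
have Lxy : Lp x y := HS (x, y) Hxy.
case: (eqVneq y p) => [->|yp]; first by left.
right; case: Hx => [<-//|Lpx]; apply: Lp_trans Lpx Lxy; by rewrite eq_sym.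
Qed.

Lemma nsym (T : eqType) (x y : T) : x != y -> y != x.
Proof. by rewrite eq_sym. Qed.

Section Main.
Variables (A S : {set 'I_n * 'I_n}) (A0 : 'M[R]_n) (u0 : 'I_n) (d : 'I_n -> int).
Hypothesis HSg : forall p, p \in S -> L (E p.1 p.2).
Hypothesis HA0 : L A0.
Hypothesis HA0nz : forall x y, (x, y) \in A -> A0 x y != 0.
Hypothesis Hd : L (dmx d).
Hypothesis Hdu : d u0 = 3.
Hypothesis Hdb : forall x, x != u0 -> 0 <= d x <= 1.
Hypothesis Hpart : forall x, exists x', x' != x /\ Lp x x' /\ Lp x' x.

Lemma d_rng p q : d p - d q \in rng.
Proof.
apply: rngP; case: (eqVneq p u0) => [->|pu]; case: (eqVneq q u0) => [->|qu];
  rewrite ?Hdu; try have := Hdb pu; try have := Hdb qu; lia.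
Qed.

Lemma distinct4 i j i' j' : ~ Lp i j -> i != j -> Lp i i' -> Lp j' j ->
  [/\ i' != j, j' != i & i' != j'].
Proof.
move=> nL ij Lii' Lj'j; split.
- by apply/eqP => e; apply: nL; rewrite -e.
- by apply/eqP => e; apply: nL; rewrite -e.
- by apply/eqP => e; apply: nL; apply: Lp_trans ij Lii' _; rewrite e.
Qed.

Lemma sep_loop i j i' j' : (i, j) \in A -> i != j -> ~ Lp i j ->
  i' != i -> Lp i i' -> Lp i' i -> j' != j -> Lp j j' -> Lp j' j ->
  [|| u0 == i, u0 == i', u0 == j | u0 == j'] -> False.
Proof.
move=> HA ij nL i'i Lii' Li'i j'j Ljj' Lj'j Hu.
have [i'j j'i i'j'] := distinct4 nL ij Lii' Lj'j.
have Hi := Ldiff (nsym i'i) Lii' Li'i.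
have Hj := Ldiff (nsym j'j) Ljj' Lj'j.
have HX := Lkey ij (nsym i'i) (nsym j'i) (nsym i'j)
  (nsym j'j) i'j' HA0 Hi Hj.
apply: nL; apply: (Lsep HX Hd d_rng erefl (HA0nz HA)); first by rewrite eq_sym.
apply/eqP => e.
case/or4P: Hu => /eqP eu; subst u0.
- have := Hdb i'i; have := Hdb (nsym ij); have := Hdb j'i; lia.
- have := Hdb (nsym i'i); have := Hdb (nsym i'j);
  have := Hdb (nsym i'j'); lia.
- have := Hdb ij; have := Hdb i'j; have := Hdb j'j; lia.
- have := Hdb (nsym j'i); have := Hdb (nsym j'j); have := Hdb i'j'; lia.
Qed.

Lemma Zback w v : (w, v) \in A :|: S -> (v = u0 \/ Lp v u0) -> (w = u0 \/ Lp w u0).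
Proof.
move=> Hwv Hv.
case: (eqVneq w u0) => [->|wu]; first by left.
right.
case: (eqVneq w v) => [ewv|wv].
  by subst w; case: Hv => // e; rewrite e eqxx in wu.
case: (classic (Lp w v)) => [Lwv|nLwv].
  by case: Hv => [<-//|Lv]; apply: Lp_trans wu Lwv Lv.
have HwA : (w, v) \in A.
  by move: Hwv; rewrite in_setU => /orP[//|HS]; case: nLwv; apply: (HSg HS).
have [w' [w'w [Lww' Lw'w]]] := Hpart w.
have [v'' [v''v [Lvv'' Lv''v]]] := Hpart v.
case: (classic (v = u0 \/ Lp u0 v)) => [Hc|Hc].
  case: (eqVneq v u0) => [evu|vu].
    exfalso; apply: (sep_loop HwA wv nLwv w'w Lww' Lw'w v''v Lvv'' Lv''v).
    by rewrite evu eqxx !orbT.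
  case: Hc => [evu|Luv]; first by rewrite evu eqxx in vu.
  have Lvu : Lp v u0 by case: Hv => // e; rewrite e eqxx in vu.
  exfalso; apply: (sep_loop HwA wv nLwv w'w Lww' Lw'w (nsym vu) Lvu Luv).
  by rewrite eqxx !orbT.
have vu : v != u0 by apply/eqP => e; apply: Hc; left.
have Lvu : Lp v u0 by case: Hv => // e; rewrite e eqxx in vu.
have v''u : v'' != u0 by apply/eqP => e; apply: Hc; right; rewrite -e.
have [w'v v''w w'v''] := distinct4 nLwv wv Lww' Lv''v.
have Hi := Ldiff (nsym w'w) Lww' Lw'w.
have Hj := Ldiff (nsym v''v) Lvv'' Lv''v.
have HX := Lkey wv (nsym w'w) (nsym v''w) (nsym w'v) (nsym v''v) w'v'' HA0 Hi Hj.
have := LZ (A0 w v)^-1 (Lbr HX Lvu).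
congr L.
rewrite mulmxDl mulmxDr -!scalemxAl -!scalemxAr !mul_delta_mx_cond eqxx.
rewrite (negbTE w'v) (eq_sym u0 w) (negbTE wu) (eq_sym u0 v'') (negbTE v''u).
by rewrite !mulr0n mulr1n !scaler0 !addr0 subr0 scalerA mulVf ?scale1r ?HA0nz.
Qed.

Lemma Zfwd v w : (v, w) \in A :|: S -> (v = u0 \/ Lp u0 v) -> (w = u0 \/ Lp u0 w).
Proof.
move=> Hvw Hv.
case: (eqVneq w u0) => [->|wu]; first by left.
right.
case: (eqVneq v w) => [evw|vw].
  by subst w; case: Hv => // e; rewrite e eqxx in wu.
case: (classic (Lp v w)) => [Lvw|nLvw].
  by case: Hv => [e|Lv]; [rewrite -e | apply: Lp_trans (nsym wu) Lv Lvw].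
have HvA : (v, w) \in A.
  by move: Hvw; rewrite in_setU => /orP[//|HS]; case: nLvw; apply: (HSg HS).
have [w' [w'w [Lww' Lw'w]]] := Hpart w.
have [v'' [v''v [Lvv'' Lv''v]]] := Hpart v.
case: (classic (v = u0 \/ Lp v u0)) => [Hc|Hc].
  case: (eqVneq v u0) => [evu|vu].
    exfalso; apply: (sep_loop HvA vw nLvw v''v Lvv'' Lv''v w'w Lww' Lw'w).
    by rewrite evu eqxx.
  case: Hc => [evu|Lvu]; first by rewrite evu eqxx in vu.
  have Luv : Lp u0 v by case: Hv => // e; rewrite e eqxx in vu.
  exfalso; apply: (sep_loop HvA vw nLvw (nsym vu) Lvu Luv w'w Lww' Lw'w).
  by rewrite eqxx !orbT.
have vu : v != u0 by apply/eqP => e; apply: Hc; left.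
have Luv : Lp u0 v by case: Hv => // e; rewrite e eqxx in vu.
have v''u : v'' != u0 by apply/eqP => e; apply: Hc; right; rewrite -e.
have [v''w w'v v''w'] := distinct4 nLvw vw Lvv'' Lw'w.
have Hi := Ldiff (nsym v''v) Lvv'' Lv''v.
have Hj := Ldiff (nsym w'w) Lww' Lw'w.
have HX := Lkey vw (nsym v''v) (nsym w'v) (nsym v''w) (nsym w'w) v''w' HA0 Hi Hj.
have := LZ (A0 v w)^-1 (Lbr Luv HX).
congr L.
rewrite mulmxDl mulmxDr -!scalemxAl -!scalemxAr !mul_delta_mx_cond eqxx.
rewrite (eq_sym v w') (negbTE w'v) (negbTE wu) (negbTE v''u).
by rewrite !mulr0n mulr1n !scaler0 !addr0 subr0 scalerA mulVf ?scale1r ?HA0nz.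
Qed.

Lemma good : strongly_connected (A :|: S) -> forall p q, p != q -> Lp p q.
Proof.
move=> Hsc.
have Zb : forall x, x = u0 \/ Lp x u0.
  move=> x; have /connectP[s Hs e] := Hsc x u0.
  suff : forall z, path (arcs (A :|: S)) z s ->
    (last z s = u0 \/ Lp (last z s) u0) -> z = u0 \/ Lp z u0.
    by apply => //; left.
  elim: s {Hs e} => [|y s IH] z //= /andP[Hzy Hs] Hl.
  exact: Zback Hzy (IH y Hs Hl).
have Zf : forall x, x = u0 \/ Lp u0 x.
  move=> x; have /connectP[s Hs ->] := Hsc u0 x.
  suff : forall z, path (arcs (A :|: S)) z s ->
    (z = u0 \/ Lp u0 z) -> (last z s = u0 \/ Lp u0 (last z s)).
    by apply => //; left.
  elim: s {Hs} => [|y s IH] z //= /andP[Hzy Hs] Hz.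
  exact: IH Hs (Zfwd Hzy Hz).
move=> p q pq.
case: (eqVneq p u0) => [ep|pu].
  by case: (Zf q) => [eqq|]; [rewrite ep eqq eqxx in pq | rewrite ep].
case: (eqVneq q u0) => [eqq|qu].
  by case: (Zb p) => [ep|]; [rewrite ep eqq eqxx in pq | rewrite eqq].
case: (Zb p) => [ep|Lpu]; first by rewrite ep eqxx in pu.
case: (Zf q) => [eqq|Luq]; first by rewrite eqq eqxx in qu.
exact: Lp_trans pq Lpu Luq.
Qed.

Lemma allL : strongly_connected (A :|: S) -> forall M, L M.
Proof.
move=> Hsc; have G := good Hsc.
have Ed x : L (E x x - E u0 u0).
  case: (eqVneq x u0) => [->|xu]; first by rewrite subrr; apply: L0.
  have := Lbr (G _ _ xu) (G _ _ (nsym xu)).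
  by rewrite !mul_delta_mx_cond !eqxx !mulr1n.
have Y := LB Hd (Lsum (P := predT) (fun x _ => LZ ((d x)%:~R) (Ed x))).
have eY : dmx d - \sum_(x | predT x) (d x)%:~R *: (E x x - E u0 u0) =
          (\sum_x (d x)%:~R) *: E u0 u0.
  rewrite /dmx diag_mx_sum_delta (eq_bigr (fun i => (d i)%:~R *: E i i)); last first.
    by move=> i _; rewrite mxE.
  rewrite [X in _ - X](eq_bigr (fun x => (d x)%:~R *: E x x - (d x)%:~R *: E u0 u0)); last first.
    by move=> x _; rewrite scalerBr.
  by rewrite sumrB -scaler_suml opprB addrC subrK.
have Sne : (\sum_x ((d x)%:~R : R)) != 0.
  rewrite -rmorph_sum intr_eq0; apply/negP => /eqP e.
  have : 3 <= \sum_x d x.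
    rewrite (bigD1 u0) //= Hdu lerDl sumr_ge0 // => x xu.
    by have /andP[] := Hdb xu.
  by rewrite e.
have Eu : L (E u0 u0).
  have := LZ (\sum_x ((d x)%:~R : R))^-1 Y; rewrite eY scalerA mulVf ?scale1r //.
have HE p q : L (E p q).
  case: (eqVneq p q) => [<-|pq]; last exact: G.
  by have := LD (Ed p) Eu; rewrite subrK.
move=> M; rewrite (matrix_sum_delta M).
by apply: Lsum => i _; apply: Lsum => j _; apply: LZ.
Qed.

End Main.

Lemma Ldiag X : (forall x, exists x', x' != x /\ Lp x x' /\ Lp x' x) -> L X ->
  L (diag_mx (\row_x X x x)).
Proof.
move=> Hpart HX.
suff [M [HM [Md Mz]]] : exists M, L M /\ (forall p, M p p = X p p) /\
    (forall p q, p \in enum 'I_n -> p != q -> M p q = 0).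
  congr L: HM; apply/matrixP => p q; rewrite !mxE.
  case: (eqVneq p q) => [<-|pq]; first by rewrite Md mulr1n.
  by rewrite mulr0n Mz // mem_enum.
elim: (enum 'I_n) => [|v s [M [HM [Md Mz]]]]; first by exists X.
have [v' [v'v [L1 L2]]] := Hpart v.
have Hw := Ldiff (nsym v'v) L1 L2.
exists (\matrix_(p,q) (if wt v v' p - wt v v' q == 0 then M p q else 0)).
split; first exact: (Lproj (lam := 0) erefl (@wt_rng v v') Hw HM).
split; first by move=> p; rewrite mxE subrr eqxx Md.
move=> p q; rewrite in_cons mxE => /orP[/eqP ->|ps] pq; last by rewrite Mz // if_same.
rewrite /wt eqxx (eq_sym v v') (negbTE v'v) (eq_sym q v) (negbTE pq).
by case: (q == v').
Qed.

End Basic.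

Unset Implicit Arguments.


Theorem lemma9 (R : realType) (n : nat) (Hn : (0 < n)%N)
  (A S : {set 'I_n * 'I_n}) :
  wcc_strong_ge2 S ->
  strongly_connected (A :|: S) ->
  has_self_loop (A :|: S) ->
  exists A0 : 'M[R]_n,
    Sigma_r A A0 /\
    (forall M : 'M[R]_n,
       lie_gen (fun x => x = A0 \/ exists p, p \in S /\ x = delta_mx p.1 p.2) M).
Proof.
move=> [Hw1 Hw2] Hsc [u0 Hu0].
pose l := fun p : 'I_n * 'I_n => if p == (u0, u0) then 3 else 1 : R.
have l0 p : l p != 0 by rewrite /l; case: ifP => _; rewrite ?oner_eq0 ?pnatr_eq0.
pose A0 : 'M[R]_n := \sum_(p in A) l p *: delta_mx p.1 p.2.
exists A0; split; first by exists l.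
move=> M L HL Hgen.
have pE (p : 'I_n * 'I_n) x y : ((x == p.1) && (y == p.2)) = (p == (x, y)).
  by case: p => a b; rewrite xpair_eqE eq_sym (eq_sym y).
have A0E x y : A0 x y = if (x, y) \in A then l (x, y) else 0.
  rewrite summxE; case: (boolP ((x, y) \in A)) => H.
    rewrite (bigD1 (x, y)) //= big1 ?addr0; first by rewrite !mxE !eqxx mulr1.
    by move=> p /andP[_ ne]; rewrite !mxE pE (negbTE ne) mulr0.
  apply: big1 => p pA; rewrite !mxE pE.
  by case: eqP => [e|_]; [rewrite -e pA in H | rewrite mulr0].
have HSg : forall p, p \in S -> L (delta_mx p.1 p.2).
  by move=> p Hp; apply: Hgen; right; exists p.
have HA0 : L A0 by apply: Hgen; left.
have HA0nz x y : (x, y) \in A -> A0 x y != 0 by move=> H; rewrite A0E H.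
have wsym : symmetric (warcs S) by move=> a b; rewrite /warcs orbC.
have Hpart x : exists x', x' != x /\ Lp L x x' /\ Lp L x' x.
  have [j [jx Hc]] := Hw2 x; exists j; split => //.
  have Hc' : connect (warcs S) j x by rewrite (sym_connect_sym wsym).
  split; [exact: Lp_path HSg _ _ (Hw1 _ _ Hc) (nsym jx) | exact: Lp_path HSg _ _ (Hw1 _ _ Hc') jx].
case HSu: ((u0, u0) \in S).
  pose d := fun x : 'I_n => if x == u0 then 3%Z else 0%Z.
  have Hd : L (dmx R d).
    have := LZ HL 3 (HSg _ HSu); congr L; apply/matrixP=> p q; rewrite !mxE /d /=.
    case: (eqVneq p q) => [<-|pq].
      by rewrite mulr1n andbb; case: (p == u0); rewrite ?mulr1 ?mulr0.
    rewrite mulr0n; case: (eqVneq p u0) => [ep|pu]; last by rewrite mulr0.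
    by rewrite -ep (eq_sym q) (negbTE pq) mulr0.
  apply: (allL (u0 := u0) HL HSg HA0 HA0nz Hd _ _ Hpart Hsc); first by rewrite /d eqxx.
  by move=> x xu; rewrite /d (negbTE xu).
have HuA : (u0, u0) \in A by move: Hu0; rewrite in_setU HSu orbF.
pose d := fun x : 'I_n => if (x, x) \in A then (if x == u0 then 3%Z else 1%Z) else 0%Z.
have Hd : L (dmx R d).
  have := Ldiag HL Hpart HA0; congr L; apply/matrixP=> p q; rewrite !mxE.
  congr (_ *+ _); rewrite A0E /d /l xpair_eqE andbb.
  by case: ((p, p) \in A); case: (p == u0).
apply: (allL (u0 := u0) HL HSg HA0 HA0nz Hd _ _ Hpart Hsc); first by rewrite /d HuA eqxx.
by move=> x xu; rewrite /d (negbTE xu); case: ((x, x) \in A).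
Qed.
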